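(* Let $k=\overline{\mathbb Q}$ with the trivial valuation and let $G=\operatorname{Spec}k[T]$ be the additive group (Hopf algebra coproduct $\Delta(T)=T\otimes1+1\otimes T$), with $G^{\mathrm{an}}=\operatorname{Hom}_k(k[T],\mathbb T)$ and Berkovich's hyperoperation $\odot$. For $t\in[-\infty,0)$ let $f_t\in\operatorname{Hom}_k(k[T],\mathbb T)$ be the point given by $f_t(g)=r\cdot t$ for $g\ne0$, where $r\ge0$ is the largest integer with $T^r\mid g$ (with the convention $0\cdot(-\infty)=0$), and $f_t(0)=-\infty$. Then for $x,y\in(-\infty,0)$, every $h\in f_x\odot f_y$ satisfies $\{g: h(g)<0\}=(T)$, and $$f_x\odot f_y=\begin{cases}\{f_{\max\{x,y\}}\}&\text{if }x\ne y,\\ \{f_t: t\in[-\infty,x]\}&\text{if }x=y.\end{cases}$$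
   Context: $\mathbb T=\mathbb R\cup\{-\infty\}$ is the tropical hyperfield: multiplication is usual addition with $-\infty$ absorbing, hyperaddition $s\oplus t=\max\{s,t\}$ if $s\ne t$, $s\oplus s=\{u\in\mathbb T:u\le s\}$. The trivial valuation on $k$ sends nonzero elements to $0$ and $0$ to $-\infty$. $\operatorname{Hom}_k(B,\mathbb T)$ is the set of maps $\varphi:B\to\mathbb T$ with $\varphi(0)=-\infty$, $\varphi(1)=0$, $\varphi(xy)=\varphi(x)+\varphi(y)$, $\varphi(x+y)\in\varphi(x)\oplus\varphi(y)$, restricting to the trivial valuation on $k$. With $A=k[T]$, $j_1(a)=a\otimes1$, $j_2(a)=1\otimes a$, Berkovich's hyperoperation is $g\odot h=\{f\in\operatorname{Hom}_k(A,\mathbb T):\exists\beta\in\operatorname{Hom}_k(A\otimes_kA,\mathbb T)\text{ with }\beta\circ j_1=g,\ \beta\circ j_2=h,\ f=\beta\circ\Delta\}$. *)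

(* Defs.v *)
From HB Require Import structures.
From Stdlib Require Import Reals.
From mathcomp Require Import all_boot all_order all_algebra all_field.
Set Implicit Arguments. Unset Strict Implicit. Unset Printing Implicit Defensive.
Import GRing.Theory.

(* Tropical hyperfield T = R ∪ {-oo}; None encodes -oo. *)
Definition trop := option R.

Definition tmul (s t : trop) : trop :=
  match s, t with Some a, Some b => Some (Rplus a b) | _, _ => None end.

Definition tle (s t : trop) : Prop :=
  match s, t with
  | None, _ => True
  | Some _, None => False
  | Some a, Some b => Rle a b
  end.
Definition tlt (s t : trop) : Prop := tle s t /\ s <> t.

Definition tmax (s t : trop) : trop :=
  match s, t with
  | None, _ => t
  | _, None => s
  | Some a, Some b => Some (Rmax a b)
  end.

(* u ∈ s ⊕ t : s ⊕ t = {max s t} if s <> t, and {u | u <= s} if s = t *)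
Definition thyp (s t u : trop) : Prop :=
  (s <> t /\ u = tmax s t) \/ (s = t /\ tle u s).

(* φ ∈ Hom_k(B, T), for a k-algebra B given by its structure map emb : k -> B *)
Definition is_khom (B : nzRingType) (emb : algC -> B) (phi : B -> trop) : Prop :=
  [/\ phi 0%R = None, phi 1%R = Some R0,
      (forall x y, phi (x * y)%R = tmul (phi x) (phi y)),
      (forall x y, thyp (phi x) (phi y) (phi (x + y)%R)) &
      (forall c : algC, phi (emb c) = if c == 0%R then None else Some R0)].

(* A = k[T] and A ⊗_k A = k[X, Y] modelled as {poly {poly algC}}
   (inner variable = first tensor factor, outer variable = second). *)
Definition embA (c : algC) : {poly algC} := c%:P.
Definition embAA (c : algC) : {poly {poly algC}} := c%:P%:P.

Definition j1 (p : {poly algC}) : {poly {poly algC}} := p%:P.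
Definition j2 (p : {poly algC}) : {poly {poly algC}} := p ^:P.
(* coproduct: Δ(p)(T) = p(T ⊗ 1 + 1 ⊗ T) *)
Definition Delta (p : {poly algC}) : {poly {poly algC}} :=
  (p ^:P) \Po (('X : {poly algC})%:P + 'X).

Definition odot (g h f : {poly algC} -> trop) : Prop :=
  is_khom embA f /\
  exists beta : {poly {poly algC}} -> trop,
    [/\ is_khom embAA beta,
        (forall a, beta (j1 a) = g a),
        (forall a, beta (j2 a) = h a) &
        (forall a, f a = beta (Delta a))].

(* f_t for t ∈ [-oo, 0): f_t(g) = r * t where r = mup 0 g is the largest r
   with T^r | g, with 0 * (-oo) = 0; f_t(0) = -oo. *)
Definition ft (t : trop) (g : {poly algC}) : trop :=
  if g == 0%R then None
  else let r := mup (0 : algC) g in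
       match t with
       | None => if r == 0%N then Some R0 else None
       | Some a => Some (Rmult (INR r) a)
       end.

(* Main.v *)
Require Import Defs.
From HB Require Import structures.
From Stdlib Require Import Reals.
From mathcomp Require Import all_boot all_order all_algebra all_field.
From Stdlib Require Import Lra Lia Classical.
From mathcomp Require Import ring zify.
Set Implicit Arguments. Unset Strict Implicit.
Import GRing.Theory.

Ltac tcase := repeat match goal with
  | s : trop |- _ => destruct s
  end; simpl in *.

Lemma Rmax_cases a b : (Rmax a b = a /\ Rle b a) \/ (Rmax a b = b /\ Rlt a b).
Proof. unfold Rmax; destruct (Rle_dec a b) as [H|H]; [destruct (Req_dec a b)|]; [left|right|left]; subst; split; auto; lra. Qed.

Lemma tmul_0r s : tmul s (Some R0) = s.
Proof. destruct s; simpl; auto; f_equal; lra. Qed.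
Lemma tmulC s t : tmul s t = tmul t s.
Proof. destruct s, t; simpl; auto; f_equal; lra. Qed.
Lemma tmulA s t u : tmul s (tmul t u) = tmul (tmul s t) u.
Proof. destruct s, t, u; simpl; auto; f_equal; lra. Qed.
Lemma tle_refl s : tle s s.
Proof. destruct s; simpl; auto; lra. Qed.
Lemma tle_trans s t u : tle s t -> tle t u -> tle s u.
Proof. destruct s, t, u; simpl; auto; try tauto; lra. Qed.
Lemma tle_total s t : tle s t \/ tle t s.
Proof. destruct s, t; simpl; auto; lra. Qed.
Lemma tle_antisym s t : tle s t -> tle t s -> s = t.
Proof. destruct s, t; simpl; try tauto; intros; f_equal; lra. Qed.
Lemma tle_maxl s t : tle s (tmax s t).
Proof. destruct s, t; simpl; auto; try apply Rmax_l; lra. Qed.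
Lemma tle_maxr s t : tle t (tmax s t).
Proof. destruct s, t; simpl; auto; try apply Rmax_r; lra. Qed.
Lemma tmax_lub s t u : tle s u -> tle t u -> tle (tmax s t) u.
Proof. destruct s, t, u; simpl; auto; intros; try apply Rmax_lub; auto. Qed.
Lemma tmax_l s t : tle t s -> tmax s t = s.
Proof. destruct s, t; simpl; try tauto; intros; f_equal; apply Rmax_left; auto. Qed.
Lemma tmax_r s t : tle s t -> tmax s t = t.
Proof. destruct s, t; simpl; try tauto; intros; f_equal; apply Rmax_right; auto. Qed.
Lemma tmax_None_l t : tmax None t = t.
Proof. reflexivity. Qed.
Lemma tmul_le c s t : tle s t -> tle (tmul c s) (tmul c t).
Proof. destruct c, s, t; simpl; auto; lra. Qed.
Lemma tmul_lt c s t : c <> None -> tlt s t -> tlt (tmul s c) (tmul t c).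
Proof. unfold tlt; destruct c, s, t; simpl; try tauto; intros _ [H1 H2];
  split; try lra; try congruence; intros E; inversion E; apply H2; f_equal; lra. Qed.
Lemma tlt_le s t : tlt s t -> tle s t.
Proof. now intros []. Qed.
Lemma tlt_le_trans s t u : tlt s t -> tle t u -> tlt s u.
Proof. unfold tlt; destruct s, t, u; simpl; try tauto; intros [H1 H2] H3; split; try lra;
  try congruence; intros E; inversion E; subst; apply H2; f_equal; lra. Qed.
Lemma tle_lt_trans s t u : tle s t -> tlt t u -> tlt s u.
Proof. unfold tlt; destruct s, t, u; simpl; try tauto; intros H3 [H1 H2]; split; try lra;
  try congruence; intros E; inversion E; subst; apply H2; f_equal; lra. Qed.
Lemma tlt_nle s t : tlt s t -> ~ tle t s.
Proof. intros H1 H2; destruct H1 as [H1 H3]; apply H3; apply tle_antisym; auto. Qed.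


Lemma thyp_char s t u : thyp s t u <-> (tle u (tmax s t) /\ (s <> t -> u = tmax s t)).
Proof.
unfold thyp; split.
- intros [[H1 H2]|[H1 H2]]; subst.
  + split; [apply tle_refl| auto].
  + split; [|tauto]. rewrite tmax_l; auto; apply tle_refl.
- intros [H1 H2]. destruct (classic (s = t)) as [E|E].
  + right; split; auto; subst; rewrite tmax_l in H1; auto; apply tle_refl.
  + left; auto.
Qed.

Lemma thyp_le s t u : thyp s t u -> tle u (tmax s t).
Proof. now intros H; apply thyp_char in H as [H _]. Qed.

Lemma thyp_strict s t u : thyp s t u -> tlt t s -> u = s.
Proof. intros H [H1 H2]; apply thyp_char in H as [_ H].
rewrite H; [apply tmax_l; auto| congruence]. Qed.

Lemma thyp_sym s t u : thyp s t u -> thyp t s u.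
Proof. rewrite !thyp_char. assert (tmax s t = tmax t s) as E.
{ destruct (tle_total s t); [rewrite tmax_r // tmax_l | rewrite tmax_l // tmax_r]; auto. }
rewrite E; intros [H1 H2]; split; auto. Qed.

Lemma thyp_tmul c s t u : thyp s t u -> thyp (tmul c s) (tmul c t) (tmul c u).
Proof.
rewrite !thyp_char; intros [H1 H2]; split.
- destruct (tle_total s t) as [E|E].
  + rewrite (tmax_r E) in H1; rewrite tmax_r; apply tmul_le; auto.
  + rewrite (tmax_l E) in H1; rewrite tmax_l; apply tmul_le; auto.
- intros Hne. assert (s <> t) as Hst by (intros ->; auto).
  rewrite (H2 Hst). destruct c as [c|]; [|destruct s, t; simpl in *; congruence].
  destruct (tle_total s t) as [E|E].
  + rewrite !tmax_r; auto; apply tmul_le; auto.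
  + rewrite !tmax_l; auto; apply tmul_le; auto.
Qed.

Lemma thyp_max a1 b1 c1 a2 b2 c2 : thyp a1 b1 c1 -> thyp a2 b2 c2 ->
  thyp (tmax a1 a2) (tmax b1 b2) (tmax c1 c2).
Proof.
intros H1 H2; pose proof (thyp_le H1) as L1; pose proof (thyp_le H2) as L2.
apply thyp_char; split.
- apply tmax_lub; eapply tle_trans; eauto; apply tmax_lub;
  eauto using tle_trans, tle_maxl, tle_maxr.
- intros Hne.
  assert (HS : forall a1 b1 c1 a2 b2 c2, thyp a1 b1 c1 -> thyp a2 b2 c2 ->
     tlt (tmax b1 b2) (tmax a1 a2) -> tmax c1 c2 = tmax a1 a2).
  { clear. intros a1 b1 c1 a2 b2 c2 H1 H2 Hlt.
    pose proof (thyp_le H1) as L1; pose proof (thyp_le H2) as L2.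
    destruct (tle_total a2 a1) as [E|E].
    + rewrite (tmax_l E) in Hlt |- *.
      assert (tlt b1 a1) by (eapply tle_lt_trans; [apply tle_maxl|exact Hlt]).
      rewrite (thyp_strict H1 H). apply tmax_l.
      eapply tle_trans; [exact L2|]. apply tmax_lub; auto.
      eapply tle_trans; [apply tle_maxr|]. apply tlt_le; exact Hlt.
    + rewrite (tmax_r E) in Hlt |- *.
      assert (tlt b2 a2) by (eapply tle_lt_trans; [apply tle_maxr|exact Hlt]).
      rewrite (thyp_strict H2 H). apply tmax_r.
      eapply tle_trans; [exact L1|]. apply tmax_lub; auto.
      eapply tle_trans; [apply tle_maxl|]. apply tlt_le; exact Hlt. }
  destruct (tle_total (tmax b1 b2) (tmax a1 a2)) as [E|E].
  + rewrite (tmax_l E). apply (HS a1 b1 c1 a2 b2 c2); auto. split; auto.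
  + assert (tmax a1 a2 = tmax b1 b2 -> False) by (intros; apply Hne; auto).
    rewrite (tmax_r E).
    apply (HS b1 a1 c1 b2 a2 c2); auto using thyp_sym. split; auto.
Qed.

Section RS.
Local Open Scope ring_scope.

Lemma tmul_None_r s : tmul s None = None.
Proof. by case: s. Qed.
Lemma tmax_None_r s : tmax s None = s.
Proof. by case: s. Qed.
Lemma tmul_tmax c s t : tmul c (tmax s t) = tmax (tmul c s) (tmul c t).
Proof.
case: c => [c|] //; case: s => [s|]; case: t => [t|] //=.
f_equal; case: (Rmax_cases s t) => [[-> H]|[-> H]];
[rewrite Rmax_left | rewrite Rmax_right]; auto; lra.
Qed.
Lemma tmaxC s t : tmax s t = tmax t s.
Proof. case: (tle_total s t) => E; [rewrite tmax_r // tmax_l | rewrite tmax_l // tmax_r]; auto. Qed.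
Lemma tmax_mono s s' t t' : tle s s' -> tle t t' -> tle (tmax s t) (tmax s' t').
Proof. move=> H1 H2; apply: tmax_lub; eapply tle_trans; eauto using tle_maxl, tle_maxr. Qed.
Lemma thyp_None_l t u : thyp None t u -> u = t.
Proof. move/thyp_char=> [H1 H2]; case: t H1 H2 => [t|] /=; first by move=> _ ->.
by case: u. Qed.
Lemma thyp_None_l' t : thyp None t t.
Proof. apply/thyp_char; split; first by apply: tle_refl. by []. Qed.

Lemma tmax_strict s t : tlt s (tmax s t) -> tle s t.
Proof. move=> [H1 H2]; case: (tle_total s t) => // E; exfalso; apply: H2; by rewrite tmax_l. Qed.

Fixpoint gauss (R : Type) (v : R -> trop) (b : trop) (s : seq R) : trop :=
  match s with [::] => None | c :: s' => tmax (v c) (tmul b (gauss v b s')) end.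
Definition Gs (R : nzRingType) (v : R -> trop) (b : trop) (F : {poly R}) : trop :=
  gauss v b (polyseq F).

Section Gauss.
Variables (R : comNzRingType) (emb : algC -> R) (v : R -> trop) (b : trop).
Hypothesis hv : is_khom emb v.

Let v0 : v 0 = None. Proof. by case: hv. Qed.
Let v1 : v 1 = Some R0. Proof. by case: hv. Qed.
Let vM x y : v (x * y) = tmul (v x) (v y). Proof. by case: hv. Qed.
Let vD x y : thyp (v x) (v y) (v (x + y)). Proof. by case: hv. Qed.

Lemma Gs0 : Gs v b 0 = None.
Proof. by rewrite /Gs polyseq0. Qed.

Lemma Gs_cons F c : Gs v b (F * 'X + c%:P) = tmax (v c) (tmul b (Gs v b F)).
Proof.
rewrite -cons_poly_def /Gs polyseq_cons nil_poly.
case: eqP => [->|_] /=; last by [].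
rewrite polyseqC polyseq0 /= tmul_None_r tmax_None_r.
case: eqP => [->|_] /=; first by rewrite v0.
by rewrite tmul_None_r tmax_None_r.
Qed.

Lemma GsC c : Gs v b c%:P = v c.
Proof. by rewrite -[c%:P]add0r -(mul0r 'X) Gs_cons Gs0 tmul_None_r tmax_None_r. Qed.

Lemma GsX : Gs v b 'X = tmul b (Some R0).
Proof. by rewrite -['X]addr0 -polyC0 -{1}['X]mul1r Gs_cons -polyC1 GsC v0 v1. Qed.

Lemma GsMX F : Gs v b (F * 'X) = tmul b (Gs v b F).
Proof. by rewrite -[F * 'X]addr0 -polyC0 Gs_cons v0. Qed.

Lemma GsCM c F : Gs v b (c%:P * F) = tmul (v c) (Gs v b F).
Proof.
elim/poly_ind: F => [|p d IH]; first by rewrite mulr0 Gs0 tmul_None_r.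
have -> : c%:P * (p * 'X + d%:P) = (c%:P * p) * 'X + (c * d)%:P
  by rewrite polyCM; ring.
by rewrite !Gs_cons IH vM tmul_tmax !tmulA (tmulC b).
Qed.

Lemma GsD F H : thyp (Gs v b F) (Gs v b H) (Gs v b (F + H)).
Proof.
elim/poly_ind: F H => [|p c IH] H; first by rewrite Gs0 add0r; apply: thyp_None_l'.
elim/poly_ind: H => [|q d _]; first by rewrite Gs0 addr0; apply/thyp_sym/thyp_None_l'.
have -> : p * 'X + c%:P + (q * 'X + d%:P) = (p + q) * 'X + (c + d)%:P
  by rewrite polyCD; ring.
rewrite !Gs_cons; apply: thyp_max; first by apply: vD.
by apply: thyp_tmul.
Qed.

Lemma GsM_le F H : tle (Gs v b (F * H)) (tmul (Gs v b F) (Gs v b H)).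
Proof.
elim/poly_ind: H => [|q d IH]; first by rewrite mulr0 Gs0 tmul_None_r.
have -> : F * (q * 'X + d%:P) = (F * q) * 'X + d%:P * F by ring.
apply: tle_trans; first by apply: thyp_le; apply: GsD.
rewrite GsMX GsCM Gs_cons tmul_tmax (tmulC _ (v d)).
rewrite tmaxC; apply: tmax_mono; first by apply: tle_refl.
rewrite tmulA (tmulC _ b) -tmulA; apply: tmul_le; exact: IH.
Qed.

Lemma GsM_ge F H : tle (tmul (Gs v b F) (Gs v b H)) (Gs v b (F * H)).
Proof.
elim/poly_ind: F H => [|p a IHF] H; first by rewrite Gs0.
elim/poly_ind: H => [|q c IHG]; first by rewrite Gs0 tmul_None_r.
set F := p * 'X + a%:P; set G := q * 'X + c%:P.
have EF : Gs v b F = tmax (v a) (tmul b (Gs v b p)) by rewrite Gs_cons.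
have EG : Gs v b G = tmax (v c) (tmul b (Gs v b q)) by rewrite Gs_cons.
case: (classic (Gs v b F = v a)) => HF.
- case: (classic (Gs v b G = v c)) => HG.
  + have -> : F * G = (p * G + a%:P * q) * 'X + (a * c)%:P
      by rewrite /F /G polyCM; ring.
    rewrite Gs_cons HF HG vM; apply: tle_maxl.
  +
    case: (classic (Gs v b F = None)) => HF0; first by rewrite HF0.
    have Hlt : tlt (v c) (Gs v b G).
    { split; last by move=> E; apply: HG; rewrite E.
      by rewrite EG; apply: tle_maxl. }
    have EG' : Gs v b G = tmul b (Gs v b q).
    { rewrite EG tmax_r //; apply: tmax_strict; rewrite -EG; exact: Hlt. }
    have -> : F * G = (F * q) * 'X + c%:P * F by rewrite /G; ring.
    have HD := GsD ((F * q) * 'X) (c%:P * F).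
    rewrite GsMX GsCM in HD.
    have Hs : tle (tmul (Gs v b F) (Gs v b G)) (tmul b (Gs v b (F * q))).
    { rewrite EG' tmulA (tmulC _ b) -tmulA; apply: tmul_le; exact: IHG. }
    have Hlt2 : tlt (tmul (v c) (Gs v b F)) (tmul b (Gs v b (F * q))).
    { eapply tlt_le_trans; last exact: Hs.
      rewrite (tmulC (Gs v b F)); apply: tmul_lt => //. }
    rewrite (thyp_strict HD Hlt2); exact: Hs.
- case: (classic (Gs v b G = None)) => HG0; first by rewrite HG0 tmul_None_r.
  have Hlt : tlt (v a) (Gs v b F).
  { split; last by move=> E; apply: HF; rewrite E.
    by rewrite EF; apply: tle_maxl. }
  have EF' : Gs v b F = tmul b (Gs v b p).
  { rewrite EF tmax_r //; apply: tmax_strict; rewrite -EF; exact: Hlt. }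
  have -> : F * G = (p * G) * 'X + a%:P * G by rewrite /F; ring.
  have HD := GsD ((p * G) * 'X) (a%:P * G).
  rewrite GsMX GsCM in HD.
  have Hs : tle (tmul (Gs v b F) (Gs v b G)) (tmul b (Gs v b (p * G))).
  { rewrite EF' -tmulA; apply: tmul_le; exact: IHF. }
  have Hlt2 : tlt (tmul (v a) (Gs v b G)) (tmul b (Gs v b (p * G))).
  { eapply tlt_le_trans; last exact: Hs.
    apply: tmul_lt => //. }
  rewrite (thyp_strict HD Hlt2); exact: Hs.
Qed.

Lemma Gs_khom : is_khom (fun c => (emb c)%:P) (Gs v b).
Proof.
split.
- exact: Gs0.
- by rewrite -polyC1 GsC.
- by move=> x y; apply: tle_antisym; [apply: GsM_le | apply: GsM_ge].
- by move=> x y; apply: GsD.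
- by move=> c; rewrite GsC; case: hv.
Qed.
End Gauss.

Definition v0alg (c : algC) : trop := if c == 0 then None else Some R0.

Lemma v0_khom : is_khom (fun c : algC => c) v0alg.
Proof.
have E0 : v0alg 0 = None by rewrite /v0alg eqxx.
have E1 : v0alg 1 = Some R0 by rewrite /v0alg oner_eq0.
have EM : forall a b, v0alg (a * b) = tmul (v0alg a) (v0alg b).
{ move=> a b; rewrite /v0alg mulf_eq0; case: (a == 0); case: (b == 0) => //=; f_equal; lra. }
have ED : forall a b, thyp (v0alg a) (v0alg b) (v0alg (a + b)).
{ move=> a b; rewrite /v0alg.
  case: (eqVneq a 0) => [->|Ha]; first by rewrite add0r; apply: thyp_None_l'.
  case: (eqVneq b 0) => [->|Hb]; first by rewrite addr0 (negbTE Ha); apply: thyp_sym; apply: thyp_None_l'.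
  right; split => //.
  by case: (a + b == 0) => /=; lra. }
by split.
Qed.

Lemma khom_ext (B : nzRingType) (emb : algC -> B) f g :
  is_khom emb f -> f =1 g -> is_khom emb g.
Proof.
move=> [H0 H1 HM HD HE] E; split.
- by rewrite -E.
- by rewrite -E.
- by move=> a b; rewrite -!E.
- by move=> a b; rewrite -!E.
- by move=> c; rewrite -E.
Qed.

Lemma khom_comp (A B : nzRingType) (e1 : algC -> A) (e2 : algC -> B) (phi : A -> B) beta :
  phi 0 = 0 -> phi 1 = 1 -> (forall a b, phi (a * b) = phi a * phi b) ->
  (forall a b, phi (a + b) = phi a + phi b) -> (forall c, phi (e1 c) = e2 c) ->
  is_khom e2 beta -> is_khom e1 (fun a => beta (phi a)).
Proof.
move=> P0 P1 PM PD PE [H0 H1 HM HD HE]; split.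
- by rewrite P0.
- by rewrite P1.
- by move=> a b; rewrite PM.
- by move=> a b; rewrite PD.
- by move=> c; rewrite PE.
Qed.

Lemma tmul_neg s t : tle s (Some R0) -> tlt t (Some R0) -> tlt (tmul s t) (Some R0).
Proof.
rewrite /tlt; case: s => [a|]; case: t => [b|] //= H [H1 H2]; split => //.
- lra.
- move=> E; inversion E; apply: H2; f_equal; lra.
Qed.

Section OneVar.
Variable h : {poly algC} -> trop.
Hypothesis hh : is_khom embA h.
Hypothesis hX : tlt (h 'X) (Some R0).

Let h0 : h 0 = None. Proof. by case: hh. Qed.
Let hM a b : h (a * b) = tmul (h a) (h b). Proof. by case: hh. Qed.
Let hD a b : thyp (h a) (h b) (h (a + b)). Proof. by case: hh. Qed.
Let hC c : h c%:P = if c == 0 then None else Some R0. Proof. by case: hh. Qed.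

Lemma h_le0 g : tle (h g) (Some R0).
Proof.
elim/poly_ind: g => [|p c IH]; first by rewrite h0.
apply: tle_trans; first by apply: thyp_le; apply: hD.
apply: tmax_lub.
- rewrite hM; case: (h p) IH => [a|] //=; case: (h 'X) hX => [b|] //= [] /=; lra.
- by rewrite hC; case: (_ == 0) => /=; lra.
Qed.

Lemma decomp0 (g : {poly algC}) : exists p, g = p * 'X + (g.[0])%:P.
Proof.
elim/poly_ind: g => [|p c _]; first by exists 0; rewrite mul0r add0r horner0.
by exists p; rewrite !hornerE.
Qed.

Lemma h_unit g : g.[0] != 0 -> h g = Some R0.
Proof.
move=> Hg; case: (decomp0 g) => p Ep; rewrite Ep.
have H := thyp_strict (thyp_sym (hD (p * 'X) (g.[0])%:P)).
rewrite hC (negbTE Hg) in H; apply: H.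
rewrite hM; exact: tmul_neg (h_le0 p) hX.
Qed.

Lemma h_divX g : tlt (h g) (Some R0) <-> (('X : {poly algC}) %| g).
Proof.
have -> : ('X : {poly algC}) %| g = root g 0.
{ by rewrite -dvdp_XsubCl subr0. }
case: (decomp0 g) => p Ep.
rewrite /root; case: (eqVneq g.[0] 0) => [H0|H0].
- split => // _; rewrite Ep H0 addr0 hM; exact: tmul_neg (h_le0 p) hX.
- rewrite (h_unit H0); split => // [[_ E]]. by [].
Qed.

Lemma h_Xn n : h ('X ^+ n) = match h 'X with
   | Some a => Some (Rmult (INR n) a) | None => if n == 0%N then Some R0 else None end.
Proof.
elim: n => [|n IH].
- rewrite expr0 -polyC1 hC oner_eq0; case: (h 'X) => //= a; f_equal; lra.
- rewrite exprSr hM IH; case: (h 'X) => [a|] //=.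
  + f_equal; case: n {IH} => [|n] /=; lra.
  + by rewrite tmul_None_r.
Qed.

Lemma mup_decomp (g : {poly algC}) : g != 0 ->
  exists q, g = q * 'X ^+ (mup 0 g) /\ q.[0] != 0.
Proof.
move=> Hg.
have : ('X - 0%:P) ^+ (mup 0 g) %| g by rewrite -mup_geq.
case/dvdpP => q Hq.
have Hq0 : q != 0 by apply: contraNneq Hg => E; rewrite Hq E mul0r.
have HX0 : ('X - (0 : algC)%:P) ^+ (mup 0 g) != 0.
{ by rewrite expf_neq0 // polyXsubC_eq0. }
have Hm : mup 0 g = (mup 0 q + mup 0 g)%N.
{ by rewrite {1}Hq mupM // mup_XsubCX eqxx. }
have Hq1 : mup (0 : algC) q = 0%N.
{ move: Hm; move: (mup _ g) (mup _ q) => m m2; lia. }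
exists q; split; first by rewrite {1}Hq subr0.
have := XsubC_dvd 0 Hq0; rewrite Hq1 dvdp_XsubCl /root => ->. by [].
Qed.

Lemma h_ft g : h g = ft (h 'X) g.
Proof.
rewrite /ft; case: (eqVneq g 0) => [->|Hg]; first by rewrite h0.
case: (mup_decomp Hg) => q [Eq Hq].
rewrite [in LHS]Eq hM (h_unit Hq) h_Xn.
by rewrite tmulC tmul_0r.
Qed.
End OneVar.

Lemma khom_j1 beta : is_khom embAA beta -> is_khom embA (fun a => beta (j1 a)).
Proof.
apply: khom_comp; rewrite /j1 //.
- by move=> a b; rewrite polyCM.
- by move=> a b; rewrite polyCD.
Qed.

Lemma khom_j2 beta : is_khom embAA beta -> is_khom embA (fun a => beta (j2 a)).
Proof.
apply: khom_comp; rewrite /j2.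
- by rewrite rmorph0.
- by rewrite rmorph1.
- by move=> a b; rewrite rmorphM.
- by move=> a b; rewrite rmorphD.
- by move=> c; rewrite /embA /embAA map_polyC.
Qed.

Lemma khom_Delta beta : is_khom embAA beta -> is_khom embA (fun a => beta (Defs.Delta a)).
Proof.
apply: khom_comp; rewrite /Defs.Delta.
- by rewrite rmorph0 comp_poly0.
- by rewrite rmorph1 comp_polyC.
- by move=> a b; rewrite rmorphM comp_polyM.
- by move=> a b; rewrite rmorphD comp_polyD.
- by move=> c; rewrite /embA /embAA map_polyC comp_polyC.
Qed.

Definition psi (F : {poly {poly algC}}) : {poly {poly algC}} :=
  F \Po ('X - ('X : {poly algC})%:P).

Lemma khom_psi beta : is_khom embAA beta -> is_khom embAA (fun a => beta (psi a)).
Proof.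
apply: khom_comp; rewrite /psi.
- by rewrite comp_poly0.
- by rewrite -polyC1 comp_polyC.
- by move=> a b; rewrite comp_polyM.
- by move=> a b; rewrite comp_polyD.
- by move=> c; rewrite /embAA comp_polyC.
Qed.

Lemma DeltaX : Defs.Delta 'X = j1 'X + j2 'X.
Proof. by rewrite /Defs.Delta /j1 /j2 map_polyX comp_polyX. Qed.

Lemma mupX : mup (0 : algC) 'X = 1%N.
Proof. by have := @mup_XsubCX algC 1 0 0; rewrite polyC0 subr0 expr1 eqxx. Qed.

Lemma ftX (a : R) : ft (Some a) 'X = Some a.
Proof. by rewrite /ft polyX_eq0 mupX /=; f_equal; lra. Qed.

Lemma tmul_0l s : tmul (Some R0) s = s.
Proof. by rewrite tmulC tmul_0r. Qed.

Lemma tlt_max0 x y : Rlt x R0 -> Rlt y R0 -> tlt (Some (Rmax x y)) (Some R0).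
Proof. move=> Hx Hy; split => /=; first by apply: Rmax_lub; lra.
move=> E; inversion E; case: (Rmax_cases x y) => [[E1 _]|[E1 _]]; lra. Qed.

Lemma tlt_R a : Rlt a R0 -> tlt (Some a) (Some R0).
Proof. move=> H; split => /=; first by lra. move=> E; inversion E; lra. Qed.

Lemma odot_fwd (x y : R) h : Rlt x R0 -> Rlt y R0 -> odot (ft (Some x)) (ft (Some y)) h ->
  [/\ is_khom embA h, thyp (Some x) (Some y) (h 'X), tlt (h 'X) (Some R0) &
      (forall g, h g = ft (h 'X) g)].
Proof.
move=> Hx Hy [hh [beta [hb H1 H2 H3]]].
have HX : thyp (Some x) (Some y) (h 'X).
{ rewrite H3 DeltaX -(ftX x) -(ftX y) -H1 -H2; by case: hb. }
have Hlt : tlt (h 'X) (Some R0).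
{ apply: tle_lt_trans; first exact: thyp_le HX. exact: tlt_max0. }
split => //.
by move=> g; apply: h_ft.
Qed.

Lemma odot_bwd (x y : R) h beta t : Rlt x R0 -> Rlt y R0 -> is_khom embAA beta ->
  beta (j1 'X) = Some x -> beta (j2 'X) = Some y -> beta (Defs.Delta 'X) = t ->
  tlt t (Some R0) -> (forall g, h g = ft t g) -> odot (ft (Some x)) (ft (Some y)) h.
Proof.
move=> Hx Hy hb E1 E2 E3 Ht Hh.
have KD := khom_Delta hb.
have HD : forall g, beta (Defs.Delta g) = h g.
{ move=> g; rewrite Hh -E3; apply: (h_ft KD); by rewrite E3. }
split; first exact: khom_ext KD HD.
exists beta; split => //.
- move=> a; have K := khom_j1 hb.
  have HK : tlt ((fun a => beta (j1 a)) 'X) (Some R0) by cbv beta; rewrite E1; apply: tlt_R.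
  by have := h_ft K HK a; cbv beta; rewrite E1.
- move=> a; have K := khom_j2 hb.
  have HK : tlt ((fun a => beta (j2 a)) 'X) (Some R0) by cbv beta; rewrite E2; apply: tlt_R.
  by have := h_ft K HK a; cbv beta; rewrite E2.
Qed.

Definition beta1 x (t : trop) := Gs (Gs v0alg (Some x)) t.

Lemma beta1_khom x t : is_khom embAA (beta1 x t).
Proof.
have K1 : is_khom embA (Gs v0alg (Some x)) by apply: Gs_khom; exact: v0_khom.
by apply: Gs_khom; exact: K1.
Qed.

Lemma beta1_j1 x t : beta1 x t (j1 'X) = Some x.
Proof.
rewrite /beta1 /j1 (GsC _ (emb := embA)); last by apply: Gs_khom; exact: v0_khom.
by rewrite (GsX _ (emb := fun c => c)) ?tmul_0r //; exact: v0_khom.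
Qed.

Lemma K1 x : is_khom embA (Gs v0alg (Some x)).
Proof. by apply: Gs_khom; exact: v0_khom. Qed.

Lemma beta1_X x t : beta1 x t 'X = t.
Proof. by rewrite /beta1 (GsX _ (emb := embA)) ?tmul_0r //; exact: K1. Qed.

Lemma beta1_j2 x t : beta1 x t (j2 'X) = t.
Proof. by rewrite /j2 map_polyX beta1_X. Qed.

Definition beta2 x t F := beta1 x t (psi F).

Lemma beta2_khom x t : is_khom embAA (beta2 x t).
Proof. exact: khom_psi (beta1_khom x t). Qed.

Lemma beta2_j1 x t : beta2 x t (j1 'X) = Some x.
Proof. by rewrite /beta2 /psi /j1 comp_polyC -/(j1 'X) beta1_j1. Qed.

Lemma beta2_j2 x t : tle t (Some x) -> beta2 x t (j2 'X) = Some x.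
Proof.
move=> Ht.
rewrite /beta2 /psi /j2 map_polyX comp_polyX.
have -> : ('X - ('X : {poly algC})%:P) = 1 * 'X + (- 'X)%:P
  by rewrite mul1r polyCN.
rewrite /beta1 (Gs_cons _ _ (emb := embA)); last exact: K1.
rewrite -polyC1 (GsC _ (emb := embA)); last exact: K1.
have -> : (- 'X : {poly algC}) = (-1)%:P * 'X by rewrite polyCN mulNr mul1r.
rewrite (GsCM _ (emb := fun c => c)); last exact: v0_khom.
rewrite (GsX _ (emb := fun c => c)); last exact: v0_khom.
rewrite -polyC1 (GsC _ (emb := fun c => c)); last exact: v0_khom.
have -> : v0alg (-1) = Some R0 by rewrite /v0alg oppr_eq0 oner_eq0.
have -> : v0alg 1 = Some R0 by rewrite /v0alg oner_eq0.
by rewrite !tmul_0r tmul_0l tmax_l.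
Qed.

Lemma beta2_Delta x t : beta2 x t (Defs.Delta 'X) = t.
Proof.
rewrite /beta2 DeltaX /psi comp_polyD /j1 /j2 map_polyX comp_polyC comp_polyX.
by rewrite addrC subrK beta1_X.
Qed.


End RS.
Unset Implicit Arguments.
Unset Strict Implicit.
Theorem lemma5p27 (x y : R) (hx : Rlt x R0) (hy : Rlt y R0) :
  (forall h, odot (ft (Some x)) (ft (Some y)) h ->
     forall g : {poly algC}, tlt (h g) (Some R0) <-> (('X : {poly algC}) %| g)%R)
  /\ (x <> y -> forall h, odot (ft (Some x)) (ft (Some y)) h <->
                          h =1 ft (Some (Rmax x y)))
  /\ (x = y -> forall h, odot (ft (Some x)) (ft (Some y)) h <->
                         exists t : trop, tle t (Some x) /\ h =1 ft t).
Proof.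
Local Open Scope ring_scope.
split; [|split].
- move=> h Hh g; case: (odot_fwd hx hy Hh) => hh _ Hlt _.
  exact: h_divX.
- move=> Hxy h; split.
  + move=> Hh; case: (odot_fwd hx hy Hh) => hh HX Hlt Hft.
    have E : h 'X = Some (Rmax x y).
    { move/thyp_char: HX => [_ E]; rewrite E //; congruence. }
    by move=> g; rewrite Hft E.
  + move=> Hh.
    have HX := (match beta1_khom x (Some y) with And5 _ _ _ HD _ => HD end)
                 (j1 'X) (j2 'X).
    rewrite beta1_j1 beta1_j2 -DeltaX in HX.
    have E : beta1 x (Some y) (Defs.Delta 'X) = Some (Rmax x y).
    { move/thyp_char: HX => [_ E]; rewrite E //; congruence. }
    apply: (odot_bwd hx hy (beta1_khom x (Some y)) (beta1_j1 _ _) (beta1_j2 _ _) E).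
    * exact: tlt_max0.
    * exact: Hh.
- move=> Exy; subst y => h; split.
  + move=> Hh; case: (odot_fwd hx hx Hh) => hh HX Hlt Hft.
    exists (h 'X); split => //.
    have := thyp_le HX; rewrite tmax_l //; exact: tle_refl.
  + move=> [t [Ht Hh]].
    apply: (odot_bwd hx hx (beta2_khom x t) (beta2_j1 _ _) (beta2_j2 Ht) (beta2_Delta _ _)).
    * apply: tle_lt_trans; first exact: Ht. exact: tlt_R.
    * exact: Hh.
Qed.
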